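(* For every $n\ge 3$, under the uniform model the expected Sackin index is $$E_U(S_n)=\frac{n}{2n-3}\,{}_3F_2\!\left(\begin{matrix}2,\ 2,\ 2-n\\ 1,\ 4-2n\end{matrix};2\right)=\frac{n}{2n-3}\sum_{k=0}^{n-2}\frac{(2)_k(2)_k(2-n)_k}{(1)_k(4-2n)_k}\cdot\frac{2^k}{k!},$$ where $(a)_k=a(a+1)\cdots(a+k-1)$ (the hypergeometric series terminates at $k=n-2$).
   Context: $\mathcal{BT}_n$ is the set of (isomorphism classes of) binary phylogenetic trees with leaves bijectively labeled by $\{1,\dots,n\}$ (rooted, every internal node with exactly two children); $|\mathcal{BT}_n|=(2n-3)!!$. The Sackin index is $S(T)=\sum_{i=1}^n\delta_T(i)$, where $\delta_T(i)$ is the number of arcs from the root to leaf $i$. $S_n$ is $S(T)$ for random $T\in\mathcal{BT}_n$. The uniform model gives every $T\in\mathcal{BT}_n$ probability $1/(2n-3)!!$; $E_U$ is expectation under it. ${}_pF_q$ denotes the generalized hypergeometric function $\sum_{k\ge0}\frac{(a_1)_k\cdots(a_p)_k}{(b_1)_k\cdots(b_q)_k}\frac{z^k}{k!}$. *)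

(* Defs.v *)
From HB Require Import structures.
From mathcomp Require Import all_boot all_order all_algebra.
From Stdlib Require List.
Set Implicit Arguments. Unset Strict Implicit. Unset Printing Implicit Defensive.
Import Order.TTheory GRing.Theory Num.Theory.

Inductive btree : Type :=
| Leaf of nat
| Node of btree & btree.

Fixpoint labels (t : btree) : seq nat :=
  match t with
  | Leaf a => [:: a]
  | Node l r => labels l ++ labels r
  end.

Fixpoint leaf_depths (t : btree) : seq nat :=
  match t with
  | Leaf _ => [:: 0]
  | Node l r => map S (leaf_depths l ++ leaf_depths r)
  end.

Definition sackin (t : btree) : nat := sumn (leaf_depths t).

Fixpoint min_label (t : btree) : nat :=
  match t with
  | Leaf a => a
  | Node l r => minn (min_label l) (min_label r)
  end.

(* Canonical representative of an isomorphism class (children unordered):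
   at each internal node the left subtree contains the smaller minimal label. *)
Fixpoint canonical (t : btree) : bool :=
  match t with
  | Leaf _ => true
  | Node l r => [&& canonical l, canonical r & min_label l < min_label r]
  end.

(* t is (the canonical representative of) an element of BT_n:
   leaves bijectively labelled by {1,...,n}. *)
Definition is_BT (n : nat) (t : btree) : bool :=
  canonical t && perm_eq (labels t) (iota 1 n).

Definition enumerates_BT (n : nat) (s : seq btree) : Prop :=
  List.NoDup s /\ (forall t, List.In t s <-> is_BT n t).

(* expected Sackin index under the uniform model, given an enumeration of BT_n *)
Definition EU_sackin (s : seq btree) : rat :=
  (sumn (map sackin s))%:R / (size s)%:R.

Definition poch (a : rat) (k : nat) : rat := \prod_(i < k) (a + i%:R).

(* Main.v *)
Require Import Defs.
From HB Require Import structures.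
From mathcomp Require Import all_boot all_order all_algebra.
From mathcomp Require Import zify ring lra.
From Stdlib Require Import Lia.
Import Order.TTheory GRing.Theory Num.Theory.

Fixpoint eqbt (t u : btree) : bool :=
  match t, u with
  | Leaf a, Leaf b => a == b
  | Node l r, Node l' r' => eqbt l l' && eqbt r r'
  | _, _ => false
  end.

Lemma eqbtP : Equality.axiom eqbt.
Proof.
elim=> [a|l IHl r IHr] [b|l' r'] /=; try by constructor.
- by apply: (iffP eqP) => [->|[]].
- apply: (iffP andP) => [[/IHl -> /IHr ->]//|[<- <-]].
  by split; [apply/IHl|apply/IHr].
Qed.

HB.instance Definition _ := hasDecEq.Build btree eqbtP.

Definition N (t : btree) := size (labels t).

Fixpoint ins (m : nat) (t : btree) : seq btree :=
  Node t (Leaf m) ::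
  (if t is Node l r then
     [seq Node l' r | l' <- ins m l] ++ [seq Node l r' | r' <- ins m r]
   else [::]).

Fixpoint rem (m : nat) (t : btree) : btree :=
  match t with
  | Leaf a => Leaf a
  | Node l r => if r == Leaf m then l else Node (rem m l) (rem m r)
  end.

Fixpoint enumBT (n : nat) : seq btree :=
  if n is n'.+1 then
    (if n' is 0 then [:: Leaf 1] else flatten [seq ins n t | t <- enumBT n'])
  else [::].


Lemma N_Node l r : N (Node l r) = N l + N r.
Proof. by rewrite /N /= size_cat. Qed.

Lemma N_gt0 t : 0 < N t.
Proof. by elim: t => [a|l IHl r IHr] //; rewrite N_Node; lia. Qed.

Lemma size_ld t : size (leaf_depths t) = N t.
Proof. by elim: t => [a|l IHl r IHr] //=; rewrite size_map size_cat IHl IHr N_Node. Qed.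

Lemma sumn_mapS s : sumn (map S s) = sumn s + size s.
Proof. by elim: s => //= x s ->; lia. Qed.

Lemma sackin_Node l r : sackin (Node l r) = sackin l + N l + sackin r + N r.
Proof. by rewrite /sackin /= sumn_mapS sumn_cat size_cat !size_ld; lia. Qed.

Lemma min_label_in t : min_label t \in labels t.
Proof.
elim: t => [a|l IHl r IHr] /=; first by rewrite inE.
rewrite mem_cat; case: (leqP (min_label l) (min_label r)) => h.
  by rewrite IHl.
by rewrite IHr orbT.
Qed.

Lemma min_label_le t x : x \in labels t -> min_label t <= x.
Proof.
elim: t => [a|l IHl r IHr] /=; first by rewrite inE => /eqP ->.
rewrite mem_cat geq_min => /orP[/IHl -> //|/IHr ->]; by rewrite orbT.
Qed.

Lemma labels_ins m t w : w \in ins m t -> perm_eq (labels w) (m :: labels t).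
Proof.
elim: t w => [a|l IHl r IHr] w /=.
  rewrite inE => /eqP -> /=.
  by change (perm_eq ([:: a] ++ [:: m]) ([:: m] ++ [:: a])); rewrite perm_catC.
rewrite inE => /orP[/eqP -> /=|]; first by rewrite perm_catC.
rewrite mem_cat => /orP[/mapP[l' Hl' ->]|/mapP[r' Hr' ->]] /=.
  by rewrite -cat_cons perm_cat2r IHl.
have H := IHr _ Hr'; rewrite -(perm_cat2l (labels l)) in H; eapply perm_trans; first exact: H.
by rewrite -cat1s perm_catCA.
Qed.

Arguments labels_ins {m t w}.

Lemma N_ins m t w : w \in ins m t -> N w = (N t).+1.
Proof. by move/labels_ins/perm_size. Qed.
Arguments N_ins {m t w}.

Lemma size_ins m t : size (ins m t) = (N t).*2.-1.
Proof.
elim: t => [a|l IHl r IHr] //=.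
rewrite size_cat !size_map IHl IHr N_Node.
have := N_gt0 l; have := N_gt0 r; lia.
Qed.

Lemma sum_mapNodel (s : seq btree) r k :
  (forall w, w \in s -> N w = k) ->
  sumn [seq sackin (Node w r) | w <- s] =
  sumn [seq sackin w | w <- s] + size s * (k + sackin r + N r).
Proof.
elim: s => //= w s IH H.
rewrite sackin_Node (H w) ?inE ?eqxx // IH => [|x xs]; last by apply: H; rewrite inE xs orbT.
lia.
Qed.

Lemma sum_mapNoder (s : seq btree) l k :
  (forall w, w \in s -> N w = k) ->
  sumn [seq sackin (Node l w) | w <- s] =
  sumn [seq sackin w | w <- s] + size s * (sackin l + N l + k).
Proof.
elim: s => //= w s IH H.
rewrite sackin_Node (H w) ?inE ?eqxx // IH => [|x xs]; last by apply: H; rewrite inE xs orbT.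
lia.
Qed.

Lemma sum_ins m t :
  sumn [seq sackin w | w <- ins m t] = (N t).*2.+2 * sackin t + N t + 1.
Proof.
elim: t => [a|l IHl r IHr] /=; first by rewrite /sackin /N /=.
rewrite map_cat sumn_cat -!map_comp (sum_mapNodel _ _ _ (@N_ins m l)) (sum_mapNoder _ _ _ (@N_ins m r)).
rewrite IHl IHr !size_ins !sackin_Node !N_Node.
have -> : sackin (Leaf m) = 0 by [].
have -> : N (Leaf m) = 1 by [].
move: (N_gt0 l) (N_gt0 r); move: (N l) (N r) (sackin l) (sackin r) => a b x y ha hb.
rewrite -!subn1 -!mul2n.
nia.
Qed.

Lemma ins_min m t w : (forall x, x \in labels t -> x < m) -> w \in ins m t ->
  min_label w = min_label t.
Proof.
elim: t w => [a|l IHl r IHr] w Hlt /=.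
  by rewrite inE => /eqP -> /=; apply/minn_idPl/ltnW/Hlt; rewrite inE.
rewrite inE => /orP[/eqP -> /=|].
  by apply/minn_idPl/ltnW/Hlt/min_label_in.
rewrite mem_cat => /orP[/mapP[l' Hl' ->]|/mapP[r' Hr' ->]] /=.
  by rewrite (IHl l') // => x xl; apply: Hlt; rewrite /= mem_cat xl.
by rewrite (IHr r') // => x xr; apply: Hlt; rewrite /= mem_cat xr orbT.
Qed.

Arguments ins_min {m t w}.

Lemma ins_canon m t w : canonical t -> (forall x, x \in labels t -> x < m) ->
  w \in ins m t -> canonical w.
Proof.
elim: t w => [a|l IHl r IHr] w Hc Hlt /=.
  by rewrite inE => /eqP -> /=; rewrite Hlt // inE.
rewrite inE => /orP[/eqP -> /=|].
  by apply/andP; split; [exact: Hc | apply: Hlt; exact: (min_label_in (Node l r))].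
move: Hc => /= /and3P[cl cr lt].
have Hl : forall x, x \in labels l -> x < m.
  by move=> x xl; apply: Hlt; rewrite /= mem_cat xl.
have Hr : forall x, x \in labels r -> x < m.
  by move=> x xr; apply: Hlt; rewrite /= mem_cat xr orbT.
rewrite mem_cat => /orP[/mapP[l' Hl' ->]|/mapP[r' Hr' ->]] /=.
  by rewrite (IHl l') // cr (ins_min Hl Hl') lt.
by rewrite (IHr r') // cl (ins_min Hr Hr') lt.
Qed.

Arguments ins_canon {m t w}.

Lemma rem_notin m t : m \notin labels t -> rem m t = t.
Proof.
elim: t => [a|l IHl r IHr] //=; rewrite mem_cat negb_or => /andP[nl nr].
case: eqP => [er|_]; first by move: nr; rewrite er inE eqxx.
by rewrite IHl // IHr.
Qed.

Arguments rem_notin {m t}.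

Lemma mem_ins m t w : w \in ins m t -> m \in labels w.
Proof. by move/labels_ins/perm_mem ->; rewrite inE eqxx. Qed.
Arguments mem_ins {m t w}.

Lemma rem_ins m t w : m \notin labels t -> w \in ins m t -> rem m w = t.
Proof.
elim: t w => [a|l IHl r IHr] w Hn /=.
  by rewrite inE => /eqP -> /=; rewrite eqxx.
rewrite inE => /orP[/eqP -> /=|]; first by rewrite eqxx.
move: Hn; rewrite /= mem_cat negb_or => /andP[nl nr].
rewrite mem_cat => /orP[/mapP[l' Hl' ->]|/mapP[r' Hr' ->]] /=.
  case: eqP => [er|_]; first by move: nr; rewrite er inE eqxx.
  by rewrite (IHl l') // rem_notin.
case: eqP => [er|_].
  by move: (N_ins Hr'); rewrite er /N /=; have := N_gt0 r; rewrite /N; lia.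
by rewrite (IHr r') // rem_notin.
Qed.

Arguments rem_ins {m t w}.

Lemma ins_uniq m t : m \notin labels t -> uniq (ins m t).
Proof.
elim: t => [a|l IHl r IHr] Hn //=.
move: Hn; rewrite /= mem_cat negb_or => /andP[nl nr].
rewrite mem_cat negb_or cat_uniq !map_inj_uniq ?IHl ?IHr //=; last first.
- by move=> x y [].
- by move=> x y [].
apply/andP; split.
  apply/andP; split.
    apply/mapP => -[l' _ [_ er]]; by move: nr; rewrite -er inE eqxx.
  apply/mapP => -[r' Hr' [_ er]].
  by move: (N_ins Hr'); rewrite -er /N /=; have := N_gt0 r; rewrite /N; lia.
rewrite andbT; apply/hasP => -[u /mapP[r' _ ->] /mapP[l' Hl' [el _]]].
  by move: nl; rewrite el (mem_ins Hl').
Qed.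

Lemma ins_head m t : Node t (Leaf m) \in ins m t.
Proof. by case: t => [a|l r]; rewrite /= inE eqxx. Qed.

Lemma rem_spec m u : canonical u -> uniq (labels u) -> m \in labels u ->
  (forall x, x \in labels u -> x <= m) -> u != Leaf m ->
  canonical (rem m u) && (u \in ins m (rem m u)).
Proof.
elim: u => [a|l IHl r IHr].
  by move=> _ _; rewrite inE => /eqP ->; rewrite eqxx.
move=> /= /and3P[cl cr lt]; rewrite cat_uniq => /and3P[ul dis ur].
rewrite mem_cat => mlr Hle _.
have Hll : forall x, x \in labels l -> x <= m by move=> x xl; apply: Hle; rewrite mem_cat xl.
have Hlr : forall x, x \in labels r -> x <= m by move=> x xr; apply: Hle; rewrite mem_cat xr orbT.
case: eqP => [->|nr]; first by rewrite cl ins_head.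
have Hrem : forall v, uniq (labels v) -> (forall x, x \in labels v -> x <= m) ->
    v \in ins m (rem m v) -> forall x, x \in labels (rem m v) -> x < m.
  move=> v uv Hv Hin x xr.
  have pv := labels_ins Hin.
  have xv : x \in labels v by rewrite (perm_mem pv) inE xr orbT.
  rewrite ltn_neqAle Hv // andbT; apply/eqP => exm.
  move: uv; rewrite (perm_uniq pv) /= => /andP[nm _].
  by move: xr; rewrite exm => xr; rewrite xr in nm.
case/orP: mlr => [ml|mr].
- have nmr : m \notin labels r.
    by apply/negP => mr; move/hasP: dis; apply; exists m.
  have nl : l != Leaf m.
    apply/eqP => el; move: lt; rewrite el /=.
    by rewrite ltnNge (Hlr _ (min_label_in r)).
  case/andP: (IHl cl ul ml Hll nl) => crl inl.
  rewrite /= (rem_notin nmr) crl cr /=.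
  rewrite -(ins_min (Hrem _ ul Hll inl) inl) lt /=.
  by rewrite inE mem_cat; apply/orP; right; apply/orP; left; apply/mapP; exists l.
- have nml : m \notin labels l.
    by apply/negP => ml; move/hasP: dis; apply; exists m.
  have nr' : r != Leaf m by apply/eqP.
  case/andP: (IHr cr ur mr Hlr nr') => crr inr.
  rewrite /= (rem_notin nml) crr cl /=.
  rewrite -(ins_min (Hrem _ ur Hlr inr) inr) lt /=.
  by rewrite inE mem_cat; apply/orP; right; apply/orP; right; apply/mapP; exists r.
Qed.

Lemma flatten_ins_uniq m s : uniq s -> (forall t, t \in s -> m \notin labels t) ->
  uniq (flatten [seq ins m t | t <- s]).
Proof.
elim: s => //= t s IH /andP[ts us] H.
have IH' : uniq (flatten [seq ins m t | t <- s]).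
  by apply: IH => // x xs; apply: H; rewrite inE xs orbT.
rewrite cat_uniq ins_uniq ?H ?mem_head // IH' andbT /=.
apply/hasP => -[u /flatten_mapP[t' t's ut'] ut].
have e1 := rem_ins (H t (mem_head _ _)) ut.
have nt' : m \notin labels t' by apply: H; rewrite inE t's orbT.
have e2 := rem_ins nt' ut'.
by move: ts; rewrite -e1 e2 t's.
Qed.

Lemma sumn_lin (T : eqType) (f g : T -> nat) a b s :
  (forall t, t \in s -> g t = a * f t + b) ->
  sumn (map g s) = a * sumn (map f s) + b * size s.
Proof.
elim: s => //= [|t s IH H]; first by lia.
rewrite H ?mem_head // IH; first by lia.
by move=> x xs; apply: H; rewrite inE xs orbT.
Qed.

Lemma iota_last n : perm_eq (iota 1 n.+1) (n.+1 :: iota 1 n).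
Proof. have -> : iota 1 n.+1 = iota 1 (n + 1) by rewrite addn1. rewrite iotaD add1n /=. by rewrite perm_catC. Qed.

Lemma enumBT_SS n : enumBT n.+2 = flatten [seq ins n.+2 t | t <- enumBT n.+1].
Proof. by []. Qed.

Lemma enumBT_spec n : 0 < n ->
  uniq (enumBT n) /\ (forall t, (t \in enumBT n) = is_BT n t).
Proof.
elim: n => // n IH _.
case: n IH => [_|n IH].
  split => // t; rewrite /= inE /is_BT.
  apply/eqP/andP => [->|[ct pt]]; first by [].
  case: t ct pt => [a|l r] _ pt.
    by move: (perm_mem pt a); rewrite !inE eqxx => /esym/eqP ->.
  move/perm_size: pt; rewrite /= size_cat.
  by have := N_gt0 l; have := N_gt0 r; rewrite /N; lia.
case: (IH (ltn0Sn _)) => us ms.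
have nlab : forall t, t \in enumBT n.+1 -> forall x, x \in labels t -> x < n.+2.
  move=> t; rewrite ms => /andP[_ pt] x; rewrite (perm_mem pt) mem_iota; lia.
have nm : forall t, t \in enumBT n.+1 -> n.+2 \notin labels t.
  by move=> t tin; apply/negP => /(nlab _ tin); rewrite ltnn.
rewrite enumBT_SS; split; first exact: flatten_ins_uniq.
move=> u; apply/flatten_mapP/idP => [[t tin uin]|].
  have ct : canonical t by move: tin; rewrite ms => /andP[].
  rewrite /is_BT (ins_canon ct (nlab _ tin) uin) /=.
  rewrite (perm_trans (labels_ins uin)) // perm_sym (perm_trans (iota_last n.+1)) //.
  by rewrite perm_cons perm_sym; move: tin; rewrite ms => /andP[].
move=> /andP[cu pu].
have uu : uniq (labels u) by rewrite (perm_uniq pu) iota_uniq.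
have mu : n.+2 \in labels u by rewrite (perm_mem pu) mem_iota; lia.
have le : forall x, x \in labels u -> x <= n.+2.
  by move=> x; rewrite (perm_mem pu) mem_iota; lia.
have nl : u != Leaf n.+2.
  by apply/eqP => eu; move/perm_size: pu; rewrite eu /= size_iota.
case/andP: (@rem_spec n.+2 u cu uu mu le nl) => cr inr.
exists (rem n.+2 u) => //; rewrite ms /is_BT cr /=.
have p1 := labels_ins inr.
rewrite -(perm_cons n.+2) perm_sym (perm_trans _ p1) // perm_sym.
by rewrite (perm_trans pu) // iota_last.
Qed.

Definition CC n := size (enumBT n).
Definition TT n := sumn (map sackin (enumBT n)).

Lemma N_enum n t : t \in enumBT n -> N t = n.
Proof.
case: n => // n; case: (@enumBT_spec n.+1 (ltn0Sn n)) => _ ->.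
by case/andP=> _ /perm_size; rewrite size_iota.
Qed.
Arguments N_enum {n t}.


Lemma CC_rec n : CC n.+2 = (n.+1).*2.-1 * CC n.+1.
Proof.
rewrite /CC enumBT_SS size_flatten /shape -map_comp.
rewrite (@sumn_lin _ (fun _ => 0) _ 0 (n.+1).*2.-1) //.
by move=> t tin /=; rewrite size_ins (N_enum tin).
Qed.

Lemma TT_rec n : TT n.+2 = (n.+2).*2 * TT n.+1 + n.+2 * CC n.+1.
Proof.
rewrite /TT /CC enumBT_SS map_flatten sumn_flatten -!map_comp.
rewrite (@sumn_lin _ sackin (fun t => sumn (map sackin (ins n.+2 t))) (n.+2).*2 n.+2) //.
by move=> t tin /=; rewrite sum_ins (N_enum tin); lia.
Qed.

Local Open Scope ring_scope.

Lemma poch_recr (b : rat) k : poch b k.+1 = poch b k * (b + k%:R).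
Proof. by rewrite /poch big_ord_recr. Qed.

Lemma poch_recl (b : rat) k : poch b k.+1 = b * poch (b + 1) k.
Proof.
rewrite /poch big_ord_recl /= addr0; congr (_ * _); apply: eq_bigr => i _.
rewrite /bump /= add1n -natr1. ring.
Qed.

Lemma poch0 (i k : nat) : (i < k)%N -> poch (- i%:R) k = 0.
Proof.
move=> ik; rewrite /poch (bigD1 (Ordinal ik)) //= (_ : 1 *- i + i%:R = 0) ?mul0r //; ring.
Qed.

Lemma poch_neq0 (b : rat) k : (forall i : nat, (i < k)%N -> b + i%:R != 0) -> poch b k != 0.
Proof.
elim: k => [|k IH] H; first by rewrite /poch big_ord0 oner_neq0.
rewrite poch_recr mulf_neq0 ?IH ?H // => i ik; apply: H; lia.
Qed.

Lemma poch1 k : poch 1 k = k`!%:R.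
Proof. elim: k => [|k IH]; first by rewrite /poch big_ord0. rewrite poch_recr IH factS natrM -natr1; ring. Qed.

Lemma poch2 k : poch 2 k = (k.+1)`!%:R.
Proof. elim: k => [|k IH]; first by rewrite /poch big_ord0. rewrite poch_recr IH [(k.+2)`!]factS natrM -[(k.+2)%:R]natr1 -natr1; ring. Qed.

Definition tt (n k : nat) : rat :=
  (k.+1)%:R ^+ 2 * 2 ^+ k * poch (2 - n%:R) k / poch (4 - 2 * n%:R) k.
Definition TG (n k : nat) : rat :=
  - (2 * n%:R - 2) + k%:R - 2 * k%:R ^+ 2 - k%:R ^+ 3.
Definition G (n k : nat) : rat :=
  tt n.+1 k * TG n k / ((k.+1)%:R ^+ 2 * (2 * n%:R - 2 - k%:R)).

Lemma key (F : fieldType) (a j X Y P : F) :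
  1 - a + j != 0 -> 3 - 2 * a + j != 0 -> 2 - 2 * a + j != 0 -> Y != 0 ->
  2 - 2 * a != 0 -> 3 - 2 * a != 0 -> 2 * a - 3 != 0 -> j + 1 != 0 -> j + 1 + 1 != 0 ->
  2 * a - 2 - (j + 1) != 0 -> 2 * a - 2 - j != 0 ->
  (j + 1) ^+ 2 * P * ((1 - a) * X / (1 - a + j)) /
  ((2 - 2 * a) * ((3 - 2 * a) * Y / (3 - 2 * a + j)) / (2 - 2 * a + j)) -
  2 * a / (2 * a - 3) * ((j + 1) ^+ 2 * P * X / Y) =
  (j + 1 + 1) ^+ 2 * (2 * P) * ((1 - a) * X / (1 - a + j) * (1 - a + j)) /
  ((2 - 2 * a) * ((3 - 2 * a) * Y / (3 - 2 * a + j)) / (2 - 2 * a + j) *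
   (2 - 2 * a + j)) *
  (- (2 * a - 2) + (j + 1) - 2 * (j + 1) ^+ 2 - (j + 1) ^+ 3) /
  ((j + 1 + 1) ^+ 2 * (2 * a - 2 - (j + 1))) -
  (j + 1) ^+ 2 * P * ((1 - a) * X / (1 - a + j)) /
  ((2 - 2 * a) * ((3 - 2 * a) * Y / (3 - 2 * a + j)) / (2 - 2 * a + j)) *
  (- (2 * a - 2) + j - 2 * j ^+ 2 - j ^+ 3) /
  ((j + 1) ^+ 2 * (2 * a - 2 - j)).
Proof.
move=> h1 h2 h3 h4 h5 h6 h7 h8 h9 h10 h11.
field.
by rewrite h1 h2 h3 h4 h5 h6 h7 h8 h9 h10 h11.
Qed.

Lemma term_main n k : (3 <= n)%N -> (k.+2 <= n)%N ->
  tt n.+1 k - 2 * n%:R / (2 * n%:R - 3) * tt n k = G n k.+1 - G n k.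
Proof.
move=> n3 kn.
have hn : (3 : rat) <= n%:R by rewrite ler_nat.
have : (k + 2)%:R <= n%:R :> rat by rewrite ler_nat addn2.
rewrite natrD => hk.
have hk0 : 0 <= k%:R :> rat by [].
rewrite /G /tt /TG -[(n.+1)%:R]natr1 -[(k.+2)%:R]natr1 -[(k.+1)%:R]natr1.
set a := n%:R; set j := k%:R.
have -> : 2 - (a + 1) = 1 - a by ring.
have -> : 4 - 2 * (a + 1) = 2 - 2 * a by ring.
rewrite !poch_recr.
have hC : poch (1 - a) k = (1 - a) * poch (2 - a) k / (1 - a + j).
  have E := poch_recl (1 - a) k; rewrite poch_recr in E.
  rewrite (_ : 1 - a + 1 = 2 - a) in E; last by ring.
  rewrite -E mulfK //; apply/eqP => h; lra.
have hE : poch (3 - 2 * a) k = (3 - 2 * a) * poch (4 - 2 * a) k / (3 - 2 * a + j).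
  have E := poch_recl (3 - 2 * a) k; rewrite poch_recr in E.
  rewrite (_ : 3 - 2 * a + 1 = 4 - 2 * a) in E; last by ring.
  rewrite -E mulfK //; apply/eqP => h; lra.
have hD : poch (2 - 2 * a) k = (2 - 2 * a) * poch (3 - 2 * a) k / (2 - 2 * a + j).
  have E := poch_recl (2 - 2 * a) k; rewrite poch_recr in E.
  rewrite (_ : 2 - 2 * a + 1 = 3 - 2 * a) in E; last by ring.
  rewrite -E mulfK //; apply/eqP => h; lra.
have hY : poch (4 - 2 * a) k != 0.
  apply: poch_neq0 => i ik; apply/eqP => h.
  have : (i + 2)%:R <= a :> rat by rewrite /a ler_nat; lia.
  rewrite natrD => hi.
  lra.
rewrite hC hD hE.
set X := poch (2 - a) k; set Y := poch (4 - 2 * a) k.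
rewrite [2 ^+ k.+1]exprS -/j; set P := 2 ^+ k.
apply: key; try exact: hY; apply/eqP => h; lra.
Qed.

Lemma poch_0 (b : rat) : poch b 0 = 1.
Proof. by rewrite /poch big_ord0. Qed.

Lemma tt_last k : (1 <= k)%N -> tt k.+1 k = 0.
Proof.
case: k => // k _; rewrite /tt.
have -> : (2 : rat) - (k.+2)%:R = - k%:R by rewrite -[(k.+2)%:R]natr1 -[(k.+1)%:R]natr1; ring.
by rewrite poch0 // mulr0 mul0r.
Qed.

Lemma G_last n : (1 <= n)%N -> G n n = 0.
Proof.
case: n => // n _; rewrite /G /tt.
have -> : (2 : rat) - (n.+2)%:R = - n%:R by rewrite -[(n.+2)%:R]natr1 -[(n.+1)%:R]natr1; ring.
by rewrite poch0 ?mulr0 ?mul0r.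
Qed.

Lemma G_first n : (2 <= n)%N -> G n 0 = -1.
Proof.
move=> n2; have hn : (2 : rat) <= n%:R by rewrite ler_nat.
rewrite /G /tt /TG !poch_0 /=.
field; apply/eqP => h; lra.
Qed.

Lemma term_last k : (2 <= k)%N ->
  tt k.+2 k - 2 * (k.+1)%:R / (2 * (k.+1)%:R - 3) * tt k.+1 k = G k.+1 k.+1 - G k.+1 k.
Proof.
move=> k2; have hk : (2 : rat) <= k%:R by rewrite ler_nat.
rewrite tt_last ?(leq_trans _ k2) // mulr0 subr0 G_last // sub0r.
rewrite /G /TG; set u := tt k.+2 k.
rewrite -[(k.+1)%:R]natr1.
field; rewrite ?andbT; apply/andP; split; apply/eqP => h; lra.
Qed.

Definition F n := \sum_(k < n.-1) tt n k.

Lemma F_rec n : (3 <= n)%N -> F n.+1 = 2 * n%:R / (2 * n%:R - 3) * F n + 1.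
Proof.
move=> n3.
have hF : F n = \sum_(k < n) tt n k.
  rewrite /F; case: n n3 => // n n3.
  by rewrite big_ord_recr /= tt_last ?addr0 //; lia.
have : F n.+1 - 2 * n%:R / (2 * n%:R - 3) * F n = 1.
  rewrite hF /F /= mulr_sumr -sumrB.
  rewrite (eq_bigr (fun k : 'I_n => G n (k : nat).+1 - G n k)); last first.
    move=> [k kn] _ /=.
    case: (ltnP k.+1 n) => h; first exact: term_main.
    have -> : n = k.+1 by lia.
    apply: term_last; lia.
  rewrite -(big_mkord xpredT (fun k => G n k.+1 - G n k)) telescope_sumr //.
  by rewrite G_last ?G_first ?opprK ?sub0r //; lia.
move/eqP; rewrite subr_eq => /eqP ->; exact: addrC.
Qed.

Lemma st_tt n k :
  (poch 2 k * poch 2 k * poch (2 - n%:R) k)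
     / (poch 1 k * poch (4 - 2 * n%:R) k) * 2 ^+ k / (k`!)%:R = tt n k.
Proof.
rewrite /tt poch1 poch2 factS natrM invfM.
set z := (poch (4 - 2 * n%:R) k)^-1.
have hf : (k`!)%:R != 0 :> rat by rewrite pnatr_eq0 -lt0n fact_gt0.
rewrite -natr1; field; by rewrite hf.
Qed.

Lemma CC_pos {n} : (0 < n)%N -> (0 < CC n)%N.
Proof.
elim: n => // n IH _; case: n IH => // n IH.
rewrite CC_rec muln_gt0 IH // andbT; lia.
Qed.

Lemma alg_step (K : fieldType) (q T C f : K) : C != 0 -> q + 1 != 0 ->
  2 * (q + 1) - 3 != 0 -> 2 * q + 1 != 0 -> 2 * (q + 2) - 3 != 0 ->
  T / C = (q + 1) / (2 * (q + 1) - 3) * f ->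
  (2 * (q + 2) * T + (q + 2) * C) / ((2 * q + 1) * C) =
  (q + 2) / (2 * (q + 2) - 3) * (2 * (q + 1) / (2 * (q + 1) - 3) * f + 1).
Proof.
move=> h1 h2 h3 h4 h5 IH.
have hT : T = (q + 1) / (2 * (q + 1) - 3) * f * C by rewrite -IH mulfVK.
rewrite hT; field.
by rewrite ?h1 ?h2 ?h3 ?h4 ?h5.
Qed.

Lemma ratio n : (3 <= n)%N ->
  (TT n)%:R / (CC n)%:R = n%:R / (2 * n%:R - 3) * F n :> rat.
Proof.
elim: n => // n IH hn.
case: (ltnP n 3) => h.
  have -> : n = 2 by lia.
  have -> : TT 3 = 15%N by vm_compute.
  have -> : CC 3 = 3%N by vm_compute.
  rewrite /F /= !big_ord_recr big_ord0 /tt /= !poch_recr !poch_0.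
  by field.
case: n IH h hn => // p IH h hn.
have hC := CC_pos (ltn0Sn p).
have hC' : (CC p.+1)%:R != 0 :> rat by rewrite pnatr_eq0 -lt0n.
move: {IH} (IH h) => IH.
rewrite F_rec // TT_rec CC_rec.
have hq : (2 : rat) <= p%:R by rewrite ler_nat.
set q := (p%:R : rat).
have e3 : (p.+1)%:R = q + 1 :> rat by rewrite -natr1.
have e4 : (p.+2)%:R = q + 2 :> rat by rewrite -[(p.+2)%:R]natr1 e3 -addrA.
have e1 : ((p.+2).*2 * TT p.+1 + p.+2 * CC p.+1)%:R = 2 * (q + 2) * (TT p.+1)%:R + (q + 2) * (CC p.+1)%:R :> rat.
  by rewrite natrD !natrM -mul2n natrM e4.
have e2 : ((p.+1).*2.-1 * CC p.+1)%:R = (2 * q + 1) * (CC p.+1)%:R :> rat.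
  have -> : ((p.+1).*2.-1 = 2 * p + 1)%N by rewrite doubleS /= mul2n addn1.
  by rewrite natrM natrD natrM.
rewrite e1 e2 e3 e4; rewrite e3 in IH.
apply: alg_step => //; apply/eqP => e; lra.
Qed.

Lemma In_mem (T : eqType) (x : T) (s : seq T) : List.In x s <-> x \in s.
Proof.
elim: s => [|y s IH] /=; first by split.
rewrite inE; split => [[->|/IH ->]|/orP[/eqP ->|/IH]]; by [rewrite eqxx| rewrite orbT | left | right].
Qed.

Lemma uniq_NoDup (T : eqType) (s : seq T) : uniq s <-> List.NoDup s.
Proof.
elim: s => [|y s IH] /=; first by split => // _; constructor.
split.
  move=> /andP[ys us]; constructor; last by apply/IH.
  by move/In_mem; apply/negP.
move=> H; inversion H; subst; apply/andP; split; last by apply/IH.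
by apply/negP => /In_mem.
Qed.

Theorem mainTheorem18 (n : nat) (hn : (3 <= n)%N) :
  (exists s, enumerates_BT n s) /\
  (forall s : seq btree, enumerates_BT n s ->
     EU_sackin s =
       n%:R / (2 * n%:R - 3) *
       \sum_(k < n.-1)
         (poch 2 k * poch 2 k * poch (2 - n%:R) k)
           / (poch 1 k * poch (4 - 2 * n%:R) k)
         * 2 ^+ k / (k`!)%:R).
Proof.
have n0 : (0 < n)%N by lia.
case: (@enumBT_spec n n0) => ue me.
split.
  exists (enumBT n); split; first by apply/uniq_NoDup.
  by move=> t; rewrite In_mem me.
move=> s [nd ins].
have us : uniq s by apply/uniq_NoDup.
have p : perm_eq s (enumBT n).
  apply: uniq_perm => // t; rewrite me; apply/idP/idP.
    by move/In_mem/ins.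
  by move/ins/In_mem.
rewrite /EU_sackin (perm_size p) (perm_sumn (perm_map sackin p)) -/(TT n) -/(CC n).
rewrite ratio //; congr (_ * _); rewrite /F; apply: eq_bigr => k _.
by rewrite st_tt.
Qed.
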